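(* For every $x\in W_1$ one has $J\mathfrak{e}^L_xJ^{-1}=-q\,\mathfrak{i}^R_x$. Consequently, for $v\in W_{k+1}$ and $\underline i\in\Lambda_k$, $$(\mathfrak{i}^R_xv)_{\underline i}=\sum_{j\notin\underline i}(-q)^{L(j,\underline i\cup j)-1}\,\overline{x_j}\,v_{\underline i\cup j},$$ where $L(j,\underline i')$ denotes the position of $j$ in the string $\underline i'$.
   Context: $0<q<1$, $\ell\ge2$. $\Lambda_k$ = strictly increasing $k$-tuples in $\{1,\dots,\ell\}$, $W_k=\mathbb{C}^{\Lambda_k}$ ($W_0=\mathbb{C}$), inner product $\langle v,w\rangle=\sum_{\underline i}\overline{v_{\underline i}}w_{\underline i}$. For $\underline i'$ disjoint from $\underline i$, $\underline i\cup\underline i'$ is the ordered union; $\underline i\setminus j$ removes $j$; $|\underline i|=\sum_r i_r$; $\underline i^c$ is the complementary increasing tuple. Product $\wedge_q:W_h\otimes W_k\to W_{h+k}$ (zero if $h+k>\ell$): $(v\wedge_qw)_{\underline i}=\sum_{p}(-q^{-1})^{\|p\|}v_{i_{p(1)},\dots,i_{p(h)}}w_{i_{p(h+1)},\dots,i_{p(h+k)}}$, sum over permutations $p$ of $\{1,\dots,h+k\}$ increasing on $\{1..h\}$ and on $\{h+1..h+k\}$, $\|p\|$ = number of inversions (e.g. for $x\in W_1$, $w\in W_k$: $(x\wedge_q w)_{\underline i}=\sum_r(-q)^{1-r}x_{i_r}w_{\underline i\setminus i_r}$). For $x\in W_1$: $\mathfrak{e}^L_xw=x\wedge_qw$ and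 $\mathfrak{e}^R_xw=(-q)^kw\wedge_qx$ for $w\in W_k$; $\mathfrak{i}^R_x$ is the adjoint of $\mathfrak{e}^R_x$. $J:W_k\to W_{\ell-k}$ is the antilinear map $(Jw)_{\underline i}=(-q^{-1})^{|\underline i|}q^{\frac14\ell(\ell+1)}\overline{w_{\underline i^c}}$, and $J,\mathfrak{e}^L_x,\mathfrak{i}^R_x$ are regarded as operators on $\bigoplus_{k=0}^\ell W_k$. *)

(* Defs.v *)
From HB Require Import structures.
From mathcomp Require Import all_boot all_order all_algebra.
From mathcomp Require Import complex.
From mathcomp Require Import reals.

Set Implicit Arguments.
Unset Strict Implicit.
Unset Printing Implicit Defensive.

Import Order.TTheory GRing.Theory Num.Theory.
Local Open Scope ring_scope.

(* The index set {1,...,l} is encoded by 'I_l, the element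
   j : 'I_l standing for the integer j+1.  A strictly increasing k-tuple
   in {1,...,l} is encoded by the subset {set 'I_l} of its entries (of
   cardinality k).  The space  \bigoplus_{k=0}^l W_k  is therefore the space of
   all functions {set 'I_l} -> R[i], and W_k is the subspace of functions
   supported on sets of cardinality k. *)

Definition Wsp (R : realType) (l : nat) := {set 'I_l} -> R[i].

Definition cR (R : realType) (a : R) : R[i] := (a%:C)%C.

Definition wt (l : nat) (S : {set 'I_l}) : nat := \sum_(j in S) (j.+1).

(* L(j, S) : position (1-based) of j in the increasing string S. *)
Definition pos (l : nat) (j : 'I_l) (S : {set 'I_l}) : nat :=
  #|[set i in S | (i <= j)%N]|.

(* Number of inversions ||p|| of the shuffle permutation p whose first block
   is A and second block is B: pairs (a,b), a in A, b in B, a > b. *)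
Definition ninv (l : nat) (A B : {set 'I_l}) : nat :=
  #|[set ab in setX A B | (ab.2 < ab.1)%N]|.

Definition wedgeq (R : realType) (l : nat) (q : R) (v w : Wsp R l) : Wsp R l :=
  fun S => \sum_(A : {set 'I_l} | A \subset S)
     (- cR q^-1) ^+ ninv A (S :\: A) * v A * w (S :\: A).

Definition W1 (R : realType) (l : nat) (x : 'I_l -> R[i]) : Wsp R l :=
  fun S => if #|S| == 1%N then \sum_(j in S) x j else 0.

Definition projW (R : realType) (l : nat) (k : nat) (w : Wsp R l) : Wsp R l :=
  fun S => if #|S| == k then w S else 0.

Definition eL (R : realType) (l : nat) (q : R) (x : 'I_l -> R[i]) (w : Wsp R l)
  : Wsp R l := wedgeq q (W1 x) w.

Definition eR (R : realType) (l : nat) (q : R) (x : 'I_l -> R[i]) (w : Wsp R l)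
  : Wsp R l :=
  fun S => \sum_(k < l.+1) (- cR q) ^+ k * wedgeq q (projW k w) (W1 x) S.

Definition inner (R : realType) (l : nat) (v w : Wsp R l) : R[i] :=
  \sum_(S : {set 'I_l}) Num.conj (v S) * w S.

Definition basisW (R : realType) (l : nat) (T : {set 'I_l}) : Wsp R l :=
  fun S => if S == T then 1 else 0.

(* Adjoint of a (linear) operator w.r.t. <.,.>: the conjugate transpose of
   its matrix in the standard orthonormal basis. *)
Definition adjoint (R : realType) (l : nat) (f : Wsp R l -> Wsp R l)
  : Wsp R l -> Wsp R l :=
  fun v T => \sum_(S : {set 'I_l}) Num.conj (f (@basisW R l T) S) * v S.

Definition iR (R : realType) (l : nat) (q : R) (x : 'I_l -> R[i])
  : Wsp R l -> Wsp R l := adjoint (eR q x).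

(* J : (Jw)_S = (-q^{-1})^{|S|} q^{l(l+1)/4} conj(w_{S^c});
   q^{1/4} is the positive fourth root sqrt(sqrt q). *)
Definition Jop (R : realType) (l : nat) (q : R) (w : Wsp R l) : Wsp R l :=
  fun S => (- cR q^-1) ^+ wt S * cR (Num.sqrt (Num.sqrt q)) ^+ (l * l.+1)
           * Num.conj (w (~: S)).

(* Main.v *)
Require Import Defs.
From HB Require Import structures.
From mathcomp Require Import all_boot all_order all_algebra.
From mathcomp Require Import complex.
From mathcomp Require Import reals.
From mathcomp Require Import ring zify.
From Stdlib Require Import FunctionalExtensionality.
Import Order.TTheory GRing.Theory Num.Theory.
Local Open Scope ring_scope.

Lemma conjR (R : realType) (a : R) : Num.conj (cR a) = cR a.
Proof. apply: conj_Creal. by rewrite /cR complex_real. Qed.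

Lemma cRM (R : realType) (a b : R) : cR (a * b) = cR a * cR b.
Proof. by rewrite /cR rmorphM. Qed.

Lemma cR_eq0 (R : realType) (a : R) : (cR a == 0) = (a == 0).
Proof. by rewrite /cR fmorph_eq0. Qed.

Lemma cd (R : realType) (q : R) : q != 0 -> (- cR q^-1) * (- cR q) = 1.
Proof. by move=> hq; rewrite mulrNN -cRM mulVf // /cR rmorph1. Qed.

Lemma card_lt (l n : nat) : (n <= l)%N -> #|[set i : 'I_l | (i < n)%N]| = n.
Proof.
move=> Hnl.
have -> : [set i : 'I_l | (i < n)%N] = [set widen_ord Hnl i | i in 'I_n].
  apply/setP => i; rewrite inE; apply/idP/imsetP.
  - by move=> H; exists (Ordinal H) => //; apply: val_inj.
  - by case=> k _ ->; rewrite /= ltn_ord.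
by rewrite card_imset ?card_ord //; by move=> a b /(congr1 val) /= /val_inj.
Qed.

Lemma card_split (T : finType) (A : {set T}) (P : pred T) :
  (#|[set i in A | P i]| + #|[set i in A | ~~ P i]| = #|A|)%N.
Proof.
rewrite -(cardsID [set i | P i] A); congr (_ + _)%N; apply: eq_card => i;
by rewrite !inE // andbC.
Qed.

Lemma ninv1l (l : nat) (j : 'I_l) (B : {set 'I_l}) :
  ninv [set j] B = #|[set b in B | (b < j)%N]|.
Proof.
have inj : injective (fun b : 'I_l => (j, b)) by move=> a b [].
rewrite /ninv -(card_imset _ inj).
apply: eq_card => -[a b]; rewrite !inE /=; apply/idP/imsetP.
- case/andP => /andP[/eqP -> Hb] Hlt; exists b => //; by rewrite inE Hb.
- by case=> b'; rewrite inE => /andP[Hb Hlt] [-> ->]; rewrite eqxx Hb.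
Qed.

Lemma ninv1r (l : nat) (A : {set 'I_l}) (j : 'I_l) :
  ninv A [set j] = #|[set a in A | (j < a)%N]|.
Proof.
have inj : injective (fun a : 'I_l => (a, j)) by move=> a b [].
rewrite /ninv -(card_imset _ inj).
apply: eq_card => -[a b]; rewrite !inE /=; apply/idP/imsetP.
- case/andP => /andP[Ha /eqP ->] Hlt; exists a => //; by rewrite inE Ha.
- by case=> a'; rewrite inE => /andP[Ha Hlt] [-> ->]; rewrite eqxx Ha.
Qed.

Lemma eL_formula (R : realType) (l : nat) (q : R) (x : 'I_l -> R[i])
  (w : Wsp R l) (T : {set 'I_l}) :
  eL q x w T = \sum_(j in T) (- cR q^-1) ^+ #|[set b in T :\ j | (b < j)%N]|
                 * x j * w (T :\ j).
Proof.
rewrite /eL /wedgeq /W1.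
transitivity (\sum_(A : {set 'I_l} | A \subset T) \sum_(j in A)
   (if #|A| == 1%N then (- cR q^-1) ^+ ninv A (T :\: A) * x j * w (T :\: A)
    else 0)).
  apply: eq_bigr => A _; case: ifP => _.
    by rewrite mulr_sumr mulr_suml; apply: eq_bigr => j _.
  by rewrite mulr0 mul0r big1.
rewrite (exchange_big_dep (fun j => j \in T)) /=; last first.
  by move=> A j HA Hj; exact: (subsetP HA).
apply: eq_bigr => j Hj.
rewrite (bigD1 [set j]) /=; last by rewrite sub1set Hj set11.
rewrite cards1 eqxx big1 ?addr0 ?ninv1l //.
move=> A /andP[/andP[_ HjA] HAj]; case: ifP => // /cards1P [y Hy].
move: HjA HAj; rewrite Hy => /set1P ->; by rewrite eqxx.
Qed.

Lemma eR_basis (R : realType) (l : nat) (q : R) (x : 'I_l -> R[i])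
  (I S : {set 'I_l}) :
  eR q x (@basisW R l I) S =
  if (I \subset S) && (#|S :\: I| == 1%N) then
    (- cR q) ^+ #|I| * (- cR q^-1) ^+ ninv I (S :\: I) * \sum_(j in S :\: I) x j
  else 0.
Proof.
have HI : (#|I| < l.+1)%N by rewrite ltnS; apply: leq_trans (max_card _) _; rewrite card_ord.
rewrite /eR (bigD1 (Ordinal HI)) //= big1 ?addr0; last first.
  move=> k Hk; rewrite /wedgeq big1 ?mulr0 // => A _.
  rewrite /projW /basisW; case: ifP => [/eqP HA|]; last by rewrite mulr0 mul0r.
  case: eqP => [HAI|]; last by rewrite mulr0 mul0r.
  by move: Hk; rewrite -val_eqE /= -HA HAI eqxx.
rewrite /wedgeq /projW /basisW /W1.
rewrite (eq_bigr (fun A => if A == I then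
    (- cR q^-1) ^+ ninv I (S :\: I) *
    (if #|S :\: I| == 1%N then \sum_(j in S :\: I) x j else 0) else 0)); last first.
  move=> A _; case: (eqVneq A I) => [->|nAI]; first by rewrite !eqxx mulr1.
  by rewrite if_same mulr0 mul0r.
rewrite -big_mkcondr /=.
case: (boolP (I \subset S)) => HIS /=.
  rewrite (big_pred1 I); last by move=> A; rewrite /= andbC; case: eqP => // ->.
  by case: ifP => _; rewrite ?mulr0 ?mulrA.
rewrite big_pred0 ?mulr0 //.
by move=> A; apply/andP => -[HA /eqP HAI]; move: HIS; rewrite -HAI HA.
Qed.

Lemma set_lem (l : nat) (I S : {set 'I_l}) (j : 'I_l) : j \notin I ->
  (j \in S :\: I) && ((I \subset S) && (#|S :\: I| == 1%N)) = (S == j |: I).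
Proof.
move=> Hj; apply/idP/eqP.
- case/andP => Hj' /andP[HIS /cards1P [y Hy]].
  have: j \in [set y] by rewrite -Hy.
  move/set1P => Ejy; subst y.
  apply/setP => i; rewrite in_setU1.
  case: (boolP (i \in I)) => Hi; first by rewrite orbT (subsetP HIS).
  rewrite orbF; apply/idP/eqP.
    move=> HiS; have: i \in S :\: I by rewrite inE Hi HiS.
    by rewrite Hy => /set1P.
  by move=> ->; move: Hj'; rewrite inE => /andP[].
- move=> ->.
  have -> : (j |: I) :\: I = [set j].
    apply/setP => i; rewrite !inE; case: (eqVneq i j) => [->|]; first by rewrite (negbTE Hj).
    by case: (i \in I).
  by rewrite set11 cards1 subsetUr.
Qed.

Lemma pos_lem (l : nat) (I : {set 'I_l}) (j : 'I_l) : j \notin I ->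
  pos j (j |: I) = #|[set i in I | (i < j)%N]|.+1.
Proof.
move=> Hj; rewrite /pos.
have -> : [set i in j |: I | (i <= j)%N] = j |: [set i in I | (i < j)%N].
  apply/setP => i; rewrite !inE; case: (eqVneq i j) => [->|ne]; first by rewrite leqnn.
  by rewrite /= ltn_neqAle (ne : (val i != val j)%N).
by rewrite cardsU1 inE ltnn andbF.
Qed.

Lemma split_lem (l : nat) (I : {set 'I_l}) (j : 'I_l) : j \notin I ->
  #|I| = (#|[set i in I | (i < j)%N]| + #|[set a in I | (j < a)%N]|)%N.
Proof.
move=> Hj; rewrite -(@card_split _ I (fun i : 'I_l => (i < j)%N)); congr (_ + _)%N.
apply: eq_card => i; rewrite !inE; case: (boolP (i \in I)) => //= Hi.
rewrite -leqNgt leq_eqVlt; case: (eqVneq j i) => E.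
  by move: Hj; rewrite E Hi.
by rewrite (negbTE (E : (nat_of_ord j != nat_of_ord i))).
Qed.

Lemma iR_formula (R : realType) (l : nat) (q : R) (x : 'I_l -> R[i])
  (v : Wsp R l) (I : {set 'I_l}) : q != 0 ->
  iR q x v I = \sum_(j : 'I_l | j \notin I)
           (- cR q) ^+ (pos j (j |: I)).-1 * Num.conj (x j) * v (j |: I).
Proof.
move=> hq.
rewrite /iR /adjoint.
under eq_bigr => S _ do rewrite eR_basis.
transitivity (\sum_(S : {set 'I_l}) \sum_(j in S :\: I)
  (if (I \subset S) && (#|S :\: I| == 1%N) then
    (- cR q) ^+ #|I| * (- cR q^-1) ^+ ninv I (S :\: I) * Num.conj (x j) * v S
   else 0)).
  apply: eq_bigr => S _; case: ifP => _; last by rewrite rmorph0 mul0r big1.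
  rewrite !rmorphM !rmorphXn !rmorphN /= !conjR rmorph_sum mulr_sumr mulr_suml.
  by apply: eq_bigr => j _.
rewrite (exchange_big_dep (fun j => j \notin I)) /=; last first.
  by move=> S j _; rewrite inE => /andP[].
apply: eq_bigr => j Hj.
rewrite -big_mkcondr /= (big_pred1 (j |: I)); last by move=> S; rewrite /= set_lem.
have -> : (j |: I) :\: I = [set j].
  apply/setP => i; rewrite !inE; case: (eqVneq i j) => [->|]; first by rewrite (negbTE Hj).
  by case: (i \in I).
rewrite ninv1r pos_lem //= (@split_lem _ _ _ Hj) exprD -!mulrA; congr (_ * _).
by rewrite mulrA -exprMn (mulrC (- cR q)) cd // expr1n mul1r.
Qed.

Lemma JeL (R : realType) (l : nat) (q : R) (x : 'I_l -> R[i])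
  (w : Wsp R l) (S : {set 'I_l}) : q != 0 ->
  Jop q (eL q x w) S = - cR q * iR q x (Jop q w) S.
Proof.
move=> hq.
rewrite iR_formula // /Jop eL_formula rmorph_sum /= !mulr_sumr.
apply: eq_big => [j|j Hj]; first by rewrite inE.
have E1 : ~: (j |: S) = ~:S :\ j.
  by apply/setP => i; rewrite !inE negb_or andbC.
have Hj2 : j \notin S by rewrite -in_setC.
rewrite E1 (@pos_lem _ _ _ Hj2) /wt (big_setU1 _ Hj2) /=.
rewrite !rmorphM rmorphXn rmorphN /= conjR.
set n := #|[set b in ~: S :\ j | (b < j)%N]|.
set lt := #|[set i in S | (i < j)%N]|.
set W := (\sum_(i in S) i.+1)%N.
have Hn : (n + lt = j)%N.
  rewrite -(@card_lt _ _ (ltnW (ltn_ord j))).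
  rewrite -(@card_split _ [set i : 'I_l | (i < j)%N] (fun i => i \in S)) addnC.
  congr (_ + _)%N; apply: eq_card => i; rewrite !inE.
    by rewrite andbC.
  case Hij: (i < j)%N; rewrite ?andbF //= andbT.
  have -> : (i != j) by apply: contraTneq Hij => ->; rewrite ltnn.
  by [].
have Hexp : (j.+1 + W = W + n + lt.+1)%N by rewrite -Hn; lia.
rewrite Hexp !exprD.
set d := - cR q. set c := - cR q^-1.
have Hcd : c * d = 1 by rewrite /c /d cd.
rewrite [RHS](_ : _ = (c ^+ lt.+1 * d ^+ lt.+1) *
   (c ^+ W * cR (Num.sqrt (Num.sqrt q)) ^+ (l * l.+1) *
    (c ^+ n * Num.conj (x j) * Num.conj (w (~: S :\ j))))); last first.
  rewrite !exprS; rewrite /c /d; ring.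
by rewrite -exprMn Hcd expr1n mul1r.
Qed.

Set Implicit Arguments.
Unset Strict Implicit.
Definition epsJ (R : realType) (l : nat) (q : R) (S : {set 'I_l}) : R[i] :=
  (- cR q^-1) ^+ (wt S + wt (~: S)) * cR (Num.sqrt (Num.sqrt q)) ^+ (2 * (l * l.+1))%N.

Lemma epsJ_real (R : realType) (l : nat) (q : R) (S : {set 'I_l}) :
  Num.conj (epsJ q S) = epsJ q S.
Proof. by rewrite /epsJ !rmorphM !rmorphXn rmorphN /= !conjR. Qed.

Lemma epsJ_C (R : realType) (l : nat) (q : R) (S : {set 'I_l}) :
  epsJ q (~: S) = epsJ q S.
Proof. by rewrite /epsJ setCK addnC. Qed.

Lemma epsJ_neq0 (R : realType) (l : nat) (q : R) (S : {set 'I_l}) :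
  0 < q -> epsJ q S != 0.
Proof.
move=> hq; rewrite /epsJ mulf_neq0 // expf_neq0 //.
  apply/eqP => H; have := @cd _ q (lt0r_neq0 hq); by rewrite H mul0r => /eqP; rewrite eq_sym oner_eq0.
by rewrite cR_eq0 lt0r_neq0 // !sqrtr_gt0.
Qed.

Lemma JJ (R : realType) (l : nat) (q : R) (w : Wsp R l) (S : {set 'I_l}) :
  Jop q (Jop q w) S = epsJ q S * w S.
Proof.
rewrite /Jop /epsJ setCK !rmorphM !rmorphXn rmorphN /= !conjR conjCK.
rewrite exprD mul2n -addnn exprD.
move: (cR _ ^+ _) (- cR q^-1) => C c; ring.
Qed.

Lemma Jscale (R : realType) (l : nat) (q : R) (e : {set 'I_l} -> R[i]) (v : Wsp R l)
  (S : {set 'I_l}) :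
  Jop q (fun T => e T * v T) S = Num.conj (e (~: S)) * Jop q v S.
Proof. rewrite /Jop rmorphM; ring. Qed.

Lemma J_bij (R : realType) (l : nat) (q : R) : 0 < q -> bijective (@Jop R l q).
Proof.
move=> hq.
exists (fun w S => (epsJ q S)^-1 * Jop q w S).
- move=> w; apply: functional_extensionality => S.
  by rewrite JJ mulrA mulVf ?mul1r // epsJ_neq0.
- move=> w; apply: functional_extensionality => S.
  by rewrite Jscale fmorphV /= epsJ_real epsJ_C JJ mulrA mulVf ?mul1r // epsJ_neq0.
Qed.

Theorem proposition3p11 (R : realType) (q : R) (l : nat)
  (hq0 : 0 < q) (hq1 : q < 1) (hl : (2 <= l)%N) (x : 'I_l -> R[i]) :
  (* J is invertible and J e^L_x J^{-1} = -q i^R_x *)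
  bijective (@Jop R l q) /\
  (forall (w : Wsp R l) (S : {set 'I_l}),
      Jop q (eL q x w) S = - cR q * iR q x (Jop q w) S) /\
  (* explicit formula for i^R_x on W_{k+1} *)
  (forall (k : nat) (v : Wsp R l) (I : {set 'I_l}),
      (forall T : {set 'I_l}, #|T| != k.+1 -> v T = 0) ->
      #|I| = k ->
      iR q x v I =
        \sum_(j : 'I_l | j \notin I)
           (- cR q) ^+ (pos j (j |: I)).-1 * Num.conj (x j) * v (j |: I)).
Proof.
have hq : q != 0 by rewrite lt0r_neq0.
split; first exact: J_bij.
split.
  by move=> w S; apply: JeL.
by move=> k v I _ _; apply: iR_formula.
Qed.
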